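(* Let $A\in\mathbb{R}^{n\times n}$ with rows $a_1^T,\dots,a_n^T$ and $B=(b_1,\dots,b_n)^T$ with all $b_j\neq0$. Let $\lambda_1,\dots,\lambda_n$ be pairwise distinct real numbers, none an eigenvalue of $A$. For each $i$ let $H_i$ be the affine hull of the row vectors $k_{ij}=\frac{1}{b_j}(a_j^T-\lambda_ie_j^T)$, $j=1,\dots,n$ (an affine hyperplane of $\mathbb{R}^{1\times n}$). Then $H_1\cap\dots\cap H_n\neq\emptyset$ if and only if $(A,B)$ is controllable; in that case the intersection is a single point $K$, and it satisfies $$\det(\lambda I-A+BK)=\prod_{i=1}^n(\lambda-\lambda_i).$$
   Context: $e_j$ denotes the $j$-th canonical basis vector of $\mathbb{R}^n$; $(A,B)$ controllable means $(B\;AB\;\cdots\;A^{n-1}B)$ is invertible. *)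

(* Defs.v *)
From HB Require Import structures.
From mathcomp Require Import all_boot all_order all_algebra.
From mathcomp Require Import reals.
Set Implicit Arguments. Unset Strict Implicit. Unset Printing Implicit Defensive.
Import GRing.Theory Num.Theory.
Local Open Scope ring_scope.

Definition affine_hull (R : fieldType) (m n : nat) (v : 'I_m -> 'rV[R]_n)
  (x : 'rV[R]_n) : Prop :=
  exists c : 'I_m -> R, \sum_(j < m) c j = 1 /\ x = \sum_(j < m) c j *: v j.

Definition erow (R : fieldType) (n : nat) (j : 'I_n) : 'rV[R]_n := delta_mx 0 j.

Definition kvec (R : fieldType) (n : nat) (A : 'M[R]_n) (B : 'cV[R]_n)
  (lam : 'I_n -> R) (i j : 'I_n) : 'rV[R]_n :=
  (B j 0)^-1 *: (row j A - lam i *: erow R j).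

Definition ctrb_mx (R : fieldType) (n : nat) (A : 'M[R]_n) (B : 'cV[R]_n)
  : 'M[R]_n := \matrix_(i < n, k < n) (A ^+ k *m B) i 0.

Definition controllable (R : fieldType) (n : nat) (A : 'M[R]_n) (B : 'cV[R]_n)
  : Prop := ctrb_mx A B \in unitmx.

(* Main.v *)
Require Import Defs.
From HB Require Import structures.
From mathcomp Require Import all_boot all_order all_algebra.
From mathcomp Require Import reals.
From mathcomp Require Import zify.
Import GRing.Theory Num.Theory.
Local Open Scope ring_scope.

Lemma drop_MXaddC (R : fieldType) (q : {poly R}) c j :
  drop_poly j.+1 (q * 'X + c%:P) = drop_poly j q.
Proof.
apply/polyP => i; rewrite !coef_drop_poly coefD coefMX coefC addnS /=.
by rewrite addr0.
Qed.

Lemma S_lemma (R : fieldType) n (A : 'M[R]_n.+1) (p : {poly R}) (x : R) :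
  (size p <= n.+2)%N ->
  (\sum_(j < n.+1) (drop_poly j.+1 p).[x] *: A ^+ j) *m (A - x%:M)
    = horner_mx A p - (p.[x])%:M.
Proof.
elim/poly_ind: p => [|q c IH] hs.
  rewrite big1 ?mul0mx; last by move=> j _; rewrite drop_poly0r horner0 scale0r.
  by rewrite rmorph0 horner0 -scalemx1 scale0r subr0.
have hq : (size q <= n.+1)%N.
  move: hs; rewrite size_MXaddC; case: ifP => [/andP[/eqP -> _]|_] //.
  by rewrite size_poly0.
have {}IH := IH (leq_trans hq (leqnSn _)).
set S := \sum_(j < n.+1) (drop_poly j.+1 q).[x] *: A ^+ j.
have hS : \sum_(j < n.+1) (drop_poly j.+1 (q * 'X + c%:P)).[x] *: A ^+ j
   = q.[x] *: 1%:M + S *m A.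
  rewrite big_ord_recl drop_MXaddC drop_poly0l expr0; congr (_ + _).
  rewrite /S mulmx_suml big_ord_recr /= drop_poly_eq0 // horner0 scale0r mul0mx addr0.
  apply: eq_bigr => j _; rewrite drop_MXaddC -scalemxAl /=.
  by rewrite mulmxE -exprSr.
rewrite hS mulmxDl -mulmxA.
have -> : A *m (A - x%:M) = (A - x%:M) *m A.
  by rewrite mulmxBr mulmxBl scalar_mxC.
rewrite mulmxA IH rmorphD rmorphM /= horner_mx_X horner_mx_C hornerMXaddC.
rewrite mulmxBl -scalemxAl mul1mx mul_scalar_mx scalerBr raddfD /= -scale_scalar_mx mulmxE.
set a := q.[x] *: A; set b := q.[x] *: x%:M; set h := horner_mx A q * A.
by rewrite opprD [LHS]addrC addrA subrK [- b - _]addrC addrA addrK.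
Qed.

Lemma eval_lemma (R : fieldType) n (A : 'M[R]_n.+1) (B : 'cV[R]_n.+1)
  (w : 'rV[R]_n.+1) (p : {poly R}) (x : R) :
  (w *m (\sum_(j < n.+1) (drop_poly j.+1 p).[x] *: A ^+ j) *m B) 0 0
   = (\sum_(j < n.+1) (w *m A ^+ j *m B) 0 0 *: drop_poly j.+1 p).[x].
Proof.
rewrite mulmx_sumr mulmx_suml summxE horner_sum; apply: eq_bigr => j _.
by rewrite -scalemxAr -scalemxAl mxE hornerZ mulrC.
Qed.

Lemma inj_lemma (R : fieldType) n (p : {poly R}) (z : 'I_n.+1 -> R) :
  (size p <= n.+2)%N -> p`_n.+1 != 0 ->
  \sum_(j < n.+1) z j *: drop_poly j.+1 p = 0 -> forall j, z j = 0.
Proof.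
move=> hs hl h0.
suff H : forall k (j : 'I_n.+1), (j < k)%N -> z j = 0 by move=> j; exact: (H n.+1).
elim=> [//|k IH] j hj.
have := congr1 (fun q : {poly R} => q`_(n - j)) h0.
rewrite coef_sum coef0 (bigD1 j) //= big1 ?addr0.
- rewrite coefZ coef_drop_poly (_ : (n - j + j.+1 = n.+1)%N); last first.
    have := ltn_ord j; lia.
  by move/eqP; rewrite mulf_eq0 (negbTE hl) orbF => /eqP.
- move=> j' hj'; rewrite coefZ coef_drop_poly.
  case: (ltngtP j' j) => [lt|gt|eq].
  + by rewrite IH ?mul0r //; lia.
  + rewrite nth_default ?mulr0 //; apply: leq_trans hs _.
    have := ltn_ord j; lia.
  + by case/eqP: hj'; apply: val_inj.
Qed.

Lemma roots_eq0 (R : fieldType) N (p : {poly R}) (lam : 'I_N -> R) :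
  injective lam -> (size p <= N)%N -> (forall i, p.[lam i] = 0) -> p = 0.
Proof.
move=> hinj hs hr; apply/eqP; apply/negPn/negP => hp.
have := @max_poly_roots _ p [seq lam i | i <- enum 'I_N] hp.
rewrite size_map size_enum_ord => H.
have : (N < size p)%N.
  apply: H; last by rewrite map_inj_uniq ?enum_uniq.
  by apply/allP => y /mapP [i _ ->]; apply/rootP/hr.
by rewrite ltnNge hs.
Qed.

Lemma kvecE (R : fieldType) n (A : 'M[R]_n) (B : 'cV[R]_n) (lam : 'I_n -> R) i j :
  kvec A B lam i j = (B j 0)^-1 *: row j (A - (lam i)%:M).
Proof.
rewrite /kvec /erow; congr (_ *: _); apply/rowP => k; rewrite !mxE.
by case: (eqVneq j k) => [->|ne]; rewrite /= ?mulr1n ?mulr0n ?mulr1 ?mulr0 ?mul1r.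
Qed.

Lemma mem_lemma (R : fieldType) n (A : 'M[R]_n) (B : 'cV[R]_n) (lam : 'I_n -> R) i
  (K : 'rV[R]_n) :
  (forall j, B j 0 != 0) -> (A - (lam i)%:M) \in unitmx ->
  affine_hull (kvec A B lam i) K <->
  (K *m (invmx (A - (lam i)%:M) *m B)) 0 0 = 1.
Proof.
move=> hB hM; set M := A - (lam i)%:M; split.
- move=> [c [hc ->]].
  pose w : 'rV[R]_n := \row_j (c j / B j 0).
  have -> : \sum_(j < n) c j *: kvec A B lam i j = w *m M.
    rewrite mulmx_sum_row; apply: eq_bigr => j _.
    by rewrite kvecE scalerA mxE.
  rewrite mulmxA mulmxK // mxE -hc; apply: eq_bigr => j _.
  by rewrite mxE divfK.
- move=> h; pose w := K *m invmx M.
  exists (fun j => w 0 j * B j 0); split.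
    by rewrite -h mulmxA mxE.
  rewrite -[K](mulmxKV hM) -/w mulmx_sum_row; apply: eq_bigr => j _.
  by rewrite kvecE scalerA mulfK.
Qed.

Lemma eig_unit (R : fieldType) n (M : 'M[R]_n) a :
  eigenvalue M a = ~~ ((M - a%:M) \in unitmx).
Proof. by rewrite /eigenvalue /eigenspace kermx_eq0 row_free_unit. Qed.

Lemma unit_of_inj (R : fieldType) n (U : 'M[R]_n) :
  (forall w : 'rV[R]_n, w *m U = 0 -> w = 0) -> U \in unitmx.
Proof.
move=> h; rewrite -row_free_unit -kermx_eq0; apply/eqP/row_matrixP => r.
by rewrite row0; apply: h; rewrite -row_mul mulmx_ker row0.
Qed.

Lemma nonunit_ker (R : fieldType) n (C : 'M[R]_n) :
  ~~ (C \in unitmx) -> exists2 x : 'cV[R]_n, x != 0 & C *m x = 0.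
Proof.
rewrite -unitmx_tr -row_free_unit -kermx_eq0 => /rowV0Pn [v /sub_kermxP hv nz].
exists v^T; first by apply: contra nz => /eqP h; rewrite -(trmxK v) h trmx0.
by rewrite -(trmxK C) -trmx_mul hv trmx0.
Qed.

Lemma ctrb_entry (R : fieldType) n (A : 'M[R]_n) (B : 'cV[R]_n) (w : 'rV[R]_n) k :
  (w *m ctrb_mx A B) 0 k = (w *m A ^+ k *m B) 0 0.
Proof. by rewrite -mulmxA !mxE; apply: eq_bigr => r _; rewrite mxE. Qed.

Theorem mainTheorem7 (R : realType) (n : nat) (A : 'M[R]_n) (B : 'cV[R]_n)
  (lam : 'I_n -> R)
  (hB : forall j : 'I_n, B j 0 != 0)
  (hlam : injective lam)
  (heig : forall i : 'I_n, ~~ eigenvalue A (lam i)) :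
  ((exists K : 'rV[R]_n, forall i : 'I_n, affine_hull (kvec A B lam i) K)
     <-> controllable A B) /\
  (controllable A B ->
   exists K : 'rV[R]_n,
     (forall i : 'I_n, affine_hull (kvec A B lam i) K) /\
     (forall K' : 'rV[R]_n,
        (forall i : 'I_n, affine_hull (kvec A B lam i) K') -> K' = K) /\
     char_poly (A - B *m K) = \prod_(i < n) ('X - (lam i)%:P)).
Proof.
case: n A B lam hB hlam heig => [|n] A B lam hB hlam heig.
  have hC : controllable A B by rewrite /controllable unitmxE det_mx00 unitr1.
  split; first by split => // _; exists 0 => -[].
  move=> _; exists 0; split; first by case.
  split; first by move=> K' _; apply/rowP => -[].
  by rewrite /char_poly det_mx00 big_ord0.
have hM : forall i, (A - (lam i)%:M) \in unitmx.
  by move=> i; have := heig i; rewrite eig_unit negbK.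
pose u i := invmx (A - (lam i)%:M) *m B.
have hmem : forall i K, affine_hull (kvec A B lam i) K <-> (K *m u i) 0 0 = 1.
  by move=> i K; apply: mem_lemma.
pose chi := char_poly A.
have hsz : size chi = n.+2 := size_char_poly A.
have hSc : forall x, (\sum_(j < n.+1) (drop_poly j.+1 chi).[x] *: A ^+ j)
    *m (A - x%:M) = - (chi.[x])%:M.
  by move=> x; rewrite S_lemma ?hsz // Cayley_Hamilton sub0r.
have hchi : forall i, chi.[lam i] != 0.
  move=> i; apply: contra (heig i) => h; rewrite eigenvalue_root_char.
  exact/rootP/eqP.
pose P (w : 'rV[R]_n.+1) :=
  \sum_(j < n.+1) (w *m A ^+ j *m B) 0 0 *: drop_poly j.+1 chi.
have hu : forall w i, (w *m u i) 0 0 = - (chi.[lam i])^-1 * (P w).[lam i].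
  move=> w i; rewrite -eval_lemma.
  have e : (\sum_(j < n.+1) (drop_poly j.+1 chi).[lam i] *: A ^+ j)
      = (- chi.[lam i]) *: invmx (A - (lam i)%:M).
    by rewrite -[LHS](mulmxK (hM i)) hSc -raddfN /= mul_scalar_mx.
  have e2 : w *m u i = (- (chi.[lam i])^-1) *: (w *m
     (\sum_(j < n.+1) (drop_poly j.+1 chi).[lam i] *: A ^+ j) *m B).
    by rewrite e -scalemxAr -scalemxAl scalerA mulrNN mulVf ?hchi // scale1r mulmxA.
  by rewrite e2 mxE.
have hC1 : (exists K : 'rV[R]_n.+1, forall i, affine_hull (kvec A B lam i) K)
    -> controllable A B.
  move=> [K hK]; rewrite /controllable.
  case: (boolP (ctrb_mx A B \in unitmx)) => // hC; exfalso.
  have [x hx0 hCx] := @nonunit_ker _ _ _ hC.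
  pose m := \poly_(k < n.+1) x (inord k) 0.
  have hm0 : m != 0.
    apply: contra hx0 => /eqP m0; apply/eqP/matrixP => k l; rewrite ord1 mxE.
    by have := congr1 (fun p : {poly R} => p`_k) m0; rewrite coef_poly ltn_ord coef0 inord_val.
  have hms : (size m <= n.+1)%N := size_poly _ _.
  have hmB : horner_mx A m *m B = 0.
    rewrite /m poly_def rmorph_sum mulmx_suml; apply: etrans hCx; apply/colP => r.
    rewrite summxE mxE; apply: eq_bigr => k _; rewrite inord_val.
    rewrite -mul_polyC rmorphM /= horner_mx_C rmorphXn /= horner_mx_X.
    have -> : (x k 0)%:M * A ^+ k = x k 0 *: A ^+ k by rewrite -mul_scalar_mx.
    rewrite -scalemxAl !mxE mulrC.
    by [].
  have hcomm : forall i, (A - (lam i)%:M) *m horner_mx A m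
      = horner_mx A m *m (A - (lam i)%:M).
    move=> i; rewrite mulmxBl mulmxBr scalar_mxC; congr (_ - _).
    have : horner_mx A ('X * m) = horner_mx A (m * 'X) by rewrite mulrC.
    by rewrite !rmorphM /= horner_mx_X.
  have hmu : forall i, horner_mx A m *m u i = 0.
    move=> i; rewrite -[LHS](mulKmx (hM i)) (mulmxA (A - _)) hcomm -mulmxA /u mulKVmx //.
    by rewrite hmB mulmx0.
  pose Pm := \sum_(j < n.+1) (K *m A ^+ j *m B) 0 0 *: drop_poly j.+1 m.
  have hroot : forall i, (m + Pm).[lam i] = 0.
    move=> i; rewrite hornerD /Pm -eval_lemma.
    have hS := @S_lemma _ _ A m (lam i) (leq_trans hms (leqnSn _)).
    have e : (\sum_(j < n.+1) (drop_poly j.+1 m).[lam i] *: A ^+ j) *m B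
        = - (m.[lam i]) *: u i.
      have -> : B = (A - (lam i)%:M) *m u i by rewrite mulKVmx.
      by rewrite mulmxA hS mulmxBl hmu sub0r mul_scalar_mx scaleNr.
    have := hK i; rewrite hmem => h1.
    by rewrite -mulmxA e -scalemxAr mxE h1 mulr1 addrN.
  have hPm : (size Pm <= (size m).-1)%N.
    apply/leq_sizeP => k hk; rewrite coef_sum big1 // => j _.
    rewrite coefZ coef_drop_poly nth_default ?mulr0 //; move: hk; rewrite -subn1 leq_subLR add1n => h; apply: leq_trans h _; by rewrite addnS ltnS leq_addr.
  have hmpos : (0 < size m)%N by rewrite size_poly_gt0.
  have hsum : size (m + Pm) = size m.
    by rewrite size_polyDl //; apply: leq_ltn_trans hPm _; rewrite ltn_predL.
  have := @roots_eq0 _ _ _ _ hlam _ hroot; rewrite hsum => /(_ hms) h0.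
  by move: hsum; rewrite h0 size_poly0; lia.
have hmon : chi`_n.+1 = 1.
  by have := char_poly_monic A; rewrite monicE lead_coefE -/chi hsz => /eqP.
have hPsz : forall w, (size (P w) <= n.+1)%N.
  move=> w; apply/leq_sizeP => k hk; rewrite coef_sum big1 // => j _.
  rewrite coefZ coef_drop_poly nth_default ?mulr0 // hsz; lia.
have hB2 : controllable A B ->
   exists K : 'rV[R]_n.+1,
     (forall i : 'I_n.+1, affine_hull (kvec A B lam i) K) /\
     (forall K' : 'rV[R]_n.+1,
        (forall i : 'I_n.+1, affine_hull (kvec A B lam i) K') -> K' = K) /\
     char_poly (A - B *m K) = \prod_(i < n.+1) ('X - (lam i)%:P); last first.
  split => //; split => // /hB2 [K [hK _]]; by exists K.
move=> hC.
pose U : 'M[R]_n.+1 := \matrix_(r, i) u i r 0.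
have hKU : forall (K : 'rV[R]_n.+1) (i : 'I_n.+1), (K *m U) 0 i = (K *m u i) 0 0.
  by move=> K i; rewrite !mxE; apply: eq_bigr => r _; rewrite mxE.
have hU : U \in unitmx.
  apply: unit_of_inj => w hw.
  have hz : forall i, (P w).[lam i] = 0.
    move=> i; have := hu w i; rewrite -hKU hw mxE => /esym/eqP.
    by rewrite mulf_eq0 oppr_eq0 invr_eq0 (negbTE (hchi i)) /= => /eqP.
  have hP0 := @roots_eq0 _ _ _ _ hlam (hPsz w) hz.
  have hz0 := @inj_lemma _ _ chi (fun j => (w *m A ^+ j *m B) 0 0)
     (eq_leq hsz) ltac:(by rewrite hmon oner_neq0) hP0.
  have hwC : w *m ctrb_mx A B = 0 by apply/rowP => k; rewrite ctrb_entry hz0 mxE.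
  by rewrite -[w](mulmxK hC) hwC mul0mx.
pose K : 'rV[R]_n.+1 := const_mx 1 *m invmx U.
have hKmem : forall i, (K *m u i) 0 0 = 1 by move=> i; rewrite -hKU mulmxKV // mxE.
exists K; split; first by move=> i; apply: (proj2 (hmem i K)); exact: hKmem.
split.
  move=> K' hK'; have h1 : K' *m U = const_mx 1.
    by apply/rowP => i; rewrite hKU (proj1 (hmem i K') (hK' i)) mxE.
  by rewrite /K -h1 mulmxK.
pose pi := \prod_(i < n.+1) ('X - (lam i)%:P).
have hpim : pi \is monic by apply: monic_prod_XsubC.
have hpis : size pi = n.+2 by rewrite size_prod_XsubC -[index_enum _]enumT size_enum_ord.
have hcm := char_poly_monic (A - B *m K).
have hcs := size_char_poly (A - B *m K).
apply/eqP; rewrite -subr_eq0; apply/eqP; apply: (@roots_eq0 _ _ _ _ hlam).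
  apply/leq_sizeP => k hk; rewrite coefB.
  case: (eqVneq k n.+1) => [->|ne].
    move: hpim hcm; rewrite !monicE !lead_coefE hpis hcs => /eqP -> /eqP ->.
    by rewrite subrr.
  by rewrite !nth_default ?subrr ?hpis ?hcs //; lia.
move=> i; rewrite hornerD hornerN.
have -> : pi.[lam i] = 0.
  by rewrite horner_prod (bigD1 i) //= hornerXsubC subrr mul0r.
have : eigenvalue (A - B *m K) (lam i).
  rewrite eig_unit; apply/negP => hX.
  have hK1 : K *m u i = 1%:M.
    by apply/matrixP => a b; rewrite !ord1 hKmem mxE eqxx mulr1n.
  have hv : (A - B *m K - (lam i)%:M) *m u i = 0.
    by rewrite addrAC mulmxBl /u mulKVmx // -mulmxA -/(u i) hK1 mulmx1 subrr.
  have hu0 : u i = 0 by rewrite -[u i](mulKmx hX) hv mulmx0.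
  have : B = (A - (lam i)%:M) *m u i by rewrite mulKVmx.
  rewrite hu0 mulmx0 => hB0; have := hB ord0; by rewrite hB0 mxE eqxx.
by rewrite eigenvalue_root_char => /rootP ->; rewrite subrr.
Qed.
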